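(* Let $A,B,C$ be smooth functions on $[0,1]$ and consider the Abel equation $$\frac{dx}{dt}=A(t)x^3+B(t)x^2+C(t)x,\qquad t\in[0,1].$$ Assume that $\int_0^1C(t)\,dt=0$ and that there exist real numbers $a,b$ such that the function $$aA(t)\exp\left(\int_0^tC(s)\,ds\right)+bB(t)$$ does not vanish identically and does not change sign on $[0,1]$. Then the equation has at most one non-zero periodic orbit, and when this periodic orbit exists it is hyperbolic.
   Context: A periodic orbit is a solution $x(t)$ defined on all of $[0,1]$ with $x(0)=x(1)$; $x\equiv0$ is always one, and non-zero periodic orbits are the others. The Poincaré map is $\Pi(x_0)=x(1;x_0)$ where $x(t;x_0)$ is the solution with $x(0;x_0)=x_0$; a periodic orbit with initial condition $x_0$ is hyperbolic if $\Pi'(x_0)\ne1$. *)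

(* Defs.v *)
From Stdlib Require Import Reals Lra ClassicalEpsilon.
From Coquelicot Require Import Coquelicot.
Open Scope R_scope.

Definition smooth (f : R -> R) : Prop := forall (n : nat) (t : R), ex_derive_n f n t.

Definition is_sol (A B C : R -> R) (x : R -> R) : Prop :=
  forall t, 0 <= t <= 1 ->
    is_derive x t (A t * x t ^ 3 + B t * x t ^ 2 + C t * x t).

Definition periodic_orbit (A B C : R -> R) (x : R -> R) : Prop :=
  is_sol A B C x /\ x 0 = x 1.

Definition nonzero_on01 (x : R -> R) : Prop :=
  exists t, 0 <= t <= 1 /\ x t <> 0.

(* Poincare map Pi(x0) = x(1; x0); (junk value 0 when the solution with
   x(0) = x0 does not exist on [0,1]). *)
Definition poincare (A B C : R -> R) (x0 : R) : R :=
  match excluded_middle_informative (exists x, is_sol A B C x /\ x 0 = x0) with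
  | left H => (proj1_sig (constructive_indefinite_description _ H)) 1
  | right _ => 0
  end.

Definition hyperbolic (A B C : R -> R) (x0 : R) : Prop :=
  exists d, is_derive (poincare A B C) x0 d /\ d <> 1.

(* Main.v *)
Require Import Defs.
From Stdlib Require Import Reals Lra Lia ClassicalEpsilon.
From Coquelicot Require Import Coquelicot.
Open Scope R_scope.


Definition cl01 (t : R) := Rmin 1 (Rmax 0 t).

Lemma cl01_id t : 0 <= t <= 1 -> cl01 t = t.
Proof. intros. unfold cl01, Rmin, Rmax. repeat destruct Rle_dec; lra. Qed.

Lemma cl01_in t : 0 <= cl01 t <= 1.
Proof. unfold cl01, Rmin, Rmax. repeat destruct Rle_dec; lra. Qed.

Lemma lip_cont (f : R -> R) (t c : R) :
  (forall s, Rabs (f s - f t) <= c * Rabs (s - t)) -> continuous f t.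
Proof.
  intros H. apply continuity_pt_filterlim.
  intros eps Heps.
  exists (eps / (Rabs c + 1)). split.
  - apply Rdiv_lt_0_compat; [lra | pose proof (Rabs_pos c); lra].
  - intros s [_ Hs]. unfold dist; simpl; unfold R_dist in *.
    eapply Rle_lt_trans. apply H.
    assert (Hc : c <= Rabs c) by apply RRle_abs.
    assert (0 <= Rabs (s - t)) by apply Rabs_pos.
    apply Rle_lt_trans with ((Rabs c + 1) * Rabs (s - t)). apply Rmult_le_compat_r; lra.
    assert (0 < Rabs c + 1) by (pose proof (Rabs_pos c); lra).
    apply Rmult_lt_reg_l with (/ (Rabs c + 1)). apply Rinv_0_lt_compat; lra.
    rewrite <- Rmult_assoc, Rinv_l by lra.
    replace (/ (Rabs c + 1) * eps) with (eps / (Rabs c + 1)) by (unfold Rdiv; ring). simpl in Hs. unfold R_dist in Hs. lra.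
Qed.

Lemma cl01_cont t : continuous cl01 t.
Proof.
  apply lip_cont with 1. intros s. unfold cl01, Rmin, Rmax.
  repeat destruct Rle_dec; split_Rabs; lra.
Qed.

Lemma RInt_plusR (f g : R -> R) a b : ex_RInt f a b -> ex_RInt g a b ->
  @eq R (RInt (fun x => f x + g x) a b) (RInt f a b + RInt g a b).
Proof. intros. apply (RInt_plus f g a b); auto. Qed.

Lemma RInt_minusR (f g : R -> R) a b : ex_RInt f a b -> ex_RInt g a b ->
  @eq R (RInt (fun x => f x - g x) a b) (RInt f a b - RInt g a b).
Proof. intros. apply (RInt_minus f g a b); auto. Qed.

Lemma RInt_scalR (f : R -> R) a b c : ex_RInt f a b ->
  @eq R (RInt (fun x => c * f x) a b) (c * RInt f a b).
Proof. intros. apply (RInt_scal f a b c); auto. Qed.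

Lemma RInt_zeroR a b : @eq R (RInt (fun _ => 0) a b) 0.
Proof. rewrite RInt_const. unfold scal; simpl. unfold mult; simpl. ring. Qed.

Lemma RInt_pointR (f : R -> R) a : @eq R (RInt f a a) 0.
Proof. rewrite RInt_point. reflexivity. Qed.

Lemma ex_RInt01 (f : R -> R) a b : 0 <= a <= 1 -> 0 <= b <= 1 ->
  (forall t, 0 <= t <= 1 -> continuous f t) -> ex_RInt f a b.
Proof.
  intros Ha Hb H. apply (ex_RInt_continuous (V:=R_CompleteNormedModule)). intros z Hz. apply H.
  unfold Rmin, Rmax in Hz. destruct Rle_dec; lra.
Qed.

Lemma Derive_of (f : R -> R) (x l : R) : is_derive f x l -> Derive (fun y : R => f y) x = l.
Proof. intros H. apply is_derive_unique. exact H. Qed.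

Lemma contR_mult (f g : R->R) x : continuous f x -> continuous g x -> continuous (fun y => f y * g y) x.
Proof. intros. apply continuity_pt_filterlim. apply continuity_pt_mult; apply continuity_pt_filterlim; auto. Qed.
Lemma contR_comp (f g : R->R) x : continuous f x -> continuous g (f x) -> continuous (fun y => g (f y)) x.
Proof. intros. apply continuity_pt_filterlim. apply continuity_pt_comp with (f1 := f) (f2 := g); apply continuity_pt_filterlim; auto. Qed.

Lemma exd_cont (f : R -> R) x : ex_derive f x -> continuous f x.
Proof. intros H. apply (ex_derive_continuous (K:=R_AbsRing) (V:=R_NormedModule)). exact H. Qed.

Lemma Kh_der (k : R -> R) : (forall t, 0 <= t <= 1 -> continuous k t) ->
  forall s, is_derive (fun s => RInt (fun u => k (cl01 u)) 0 s) s (k (cl01 s)).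
Proof.
  intros Hk. set (kh := fun s => k (cl01 s)).
  assert (Hkh : forall s, continuous kh s).
  { intros s. unfold kh. apply (contR_comp cl01 k). apply cl01_cont. apply Hk, cl01_in. }
  intros s. apply (is_derive_RInt (V:=R_NormedModule) kh _ 0). apply filter_forall. intros b.
  apply (RInt_correct (V:=R_CompleteNormedModule)). apply (ex_RInt_continuous (V:=R_CompleteNormedModule)). intros; apply Hkh. apply Hkh.
Qed.

Lemma lin_affine (w k bt : R -> R) :
  (forall t, 0 <= t <= 1 -> continuous k t) ->
  (forall t, 0 <= t <= 1 -> continuous bt t) ->
  (forall t, 0 <= t <= 1 -> is_derive w t (k t * w t + bt t)) ->
  forall t, 0 <= t <= 1 ->
    w t * exp (- RInt k 0 t) - w 0 = RInt (fun s => bt s * exp (- RInt (fun u => k (cl01 u)) 0 s)) 0 t.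
Proof.
  intros Hk Hb Hw.
  set (kh := fun s => k (cl01 s)).
  assert (Hkh : forall s, continuous kh s).
  { intros s. unfold kh. apply (contR_comp cl01 k). apply cl01_cont. apply Hk, cl01_in. }
  set (Kh := fun s => RInt kh 0 s).
  assert (HK : forall s, is_derive Kh s (kh s)).
  { intros s. apply (is_derive_RInt (V:=R_NormedModule) kh Kh 0). apply filter_forall. intros b.
    apply (RInt_correct (V:=R_CompleteNormedModule)). apply (ex_RInt_continuous (V:=R_CompleteNormedModule)). intros; apply Hkh. apply Hkh. }
  assert (HKe : forall s, 0 <= s <= 1 -> Kh s = RInt k 0 s).
  { intros s Hs. unfold Kh. apply RInt_ext. intros x Hx. unfold kh. rewrite cl01_id; auto.
    unfold Rmin, Rmax in Hx. destruct Rle_dec; lra. }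
  intros t Ht.
  set (W := fun s => w s * exp (- Kh s)).
  assert (HW : forall s, 0 <= s <= 1 -> is_derive W s (bt s * exp (- Kh s))).
  { intros s Hs. unfold W.
    assert (H1 := Hw s Hs). assert (H2 := HK s).
    auto_derive.
    - split. eexists; eauto. split. eexists; eauto. auto.
    - rewrite (Derive_of _ _ _ H1), (Derive_of _ _ _ H2).
      unfold kh. rewrite cl01_id; auto. ring. }
  assert (Hint : is_RInt (fun s => bt s * exp (- Kh s)) 0 t (minus (W t) (W 0))).
  { apply (is_RInt_derive (V:=R_CompleteNormedModule) W).
    - intros x Hx. apply HW. unfold Rmin, Rmax in Hx. destruct Rle_dec; lra.
    - intros x Hx. unfold Rmin, Rmax in Hx. destruct Rle_dec; try lra.
      apply (contR_mult bt (fun s => exp (- Kh s))). apply Hb; lra.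
      apply exd_cont. auto_derive. eexists; apply HK. }
  apply (is_RInt_unique (V:=R_CompleteNormedModule)) in Hint. change (minus (W t) (W 0)) with (W t - W 0) in Hint.
  replace (W 0) with (w 0) in Hint.
  2:{ unfold W, Kh. rewrite RInt_pointR. rewrite Ropp_0, exp_0. ring. }
  unfold W in Hint. rewrite HKe in Hint by auto.
  exact (eq_sym Hint).
Qed.

Lemma lin_hom (w k : R -> R) :
  (forall t, 0 <= t <= 1 -> continuous k t) ->
  (forall t, 0 <= t <= 1 -> is_derive w t (k t * w t)) ->
  forall t, 0 <= t <= 1 -> w t = w 0 * exp (RInt k 0 t).
Proof.
  intros Hk Hw t Ht.
  assert (H := lin_affine w k (fun _ => 0) Hk (fun _ _ => continuous_const _ _)).
  assert (H' : forall t, 0 <= t <= 1 -> is_derive w t (k t * w t + 0)).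
  { intros; rewrite Rplus_0_r; auto. }
  specialize (H H' t Ht).
  assert (E0 : RInt (fun s => 0 * exp (- RInt (fun u => k (cl01 u)) 0 s)) 0 t = 0).
  { rewrite <- (RInt_zeroR 0 t) at 2. apply RInt_ext. intros; apply Rmult_0_l. }
  simpl in H. rewrite E0 in H.
  assert (Hw2: w t * exp (- RInt k 0 t) = w 0) by lra.
  rewrite <- Hw2, Rmult_assoc, <- exp_plus. replace (- RInt k 0 t + RInt k 0 t) with 0 by ring.
  rewrite exp_0; ring.
Qed.

Lemma cont_eps (f : R -> R) x : continuous f x ->
  forall eps, 0 < eps -> exists d, 0 < d /\ forall y, Rabs (y - x) < d -> Rabs (f y - f x) < eps.
Proof.
  intros H eps He. apply continuity_pt_filterlim in H.
  destruct (H eps He) as [d [Hd H2]]. exists d. split. lra.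
  intros y Hy. destruct (Req_dec y x) as [->|Hne].
  - rewrite Rminus_diag, Rabs_R0. lra.
  - apply H2. split. unfold D_x, no_cond. split; auto. simpl. unfold R_dist. auto.
Qed.

Lemma RInt_ChaslesR (g : R -> R) a b c : ex_RInt g a b -> ex_RInt g b c ->
  @eq R (RInt g a b + RInt g b c) (RInt g a c).
Proof. intros. apply (RInt_Chasles g a b c); auto. Qed.

Lemma int_pos (g : R -> R) :
  (forall t, 0 <= t <= 1 -> continuous g t) ->
  (forall t, 0 <= t <= 1 -> 0 <= g t) ->
  (exists t, 0 <= t <= 1 /\ g t <> 0) -> 0 < RInt g 0 1.
Proof.
  intros Hc Hp [t0 [Ht0 Hn]].
  assert (Hg0 : 0 < g t0) by (specialize (Hp t0 Ht0); lra).
  destruct (cont_eps g t0 (Hc t0 Ht0) (g t0 / 2)) as [d [Hd Hdd]]. lra.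
  set (u := Rmax 0 (t0 - d/2)). set (v := Rmin 1 (t0 + d/2)).
  assert (Hu : 0 <= u <= t0) by (unfold u, Rmax; destruct Rle_dec; lra).
  assert (Hv : t0 <= v <= 1) by (unfold v, Rmin; destruct Rle_dec; lra).
  assert (Huv : u < v) by (unfold u, v, Rmax, Rmin; repeat destruct Rle_dec; lra).
  assert (I1 : 0 <= RInt g 0 u).
  { apply RInt_ge_0. lra. apply ex_RInt01; auto; lra. intros; apply Hp; lra. }
  assert (I3 : 0 <= RInt g v 1).
  { apply RInt_ge_0. lra. apply ex_RInt01; auto; lra. intros; apply Hp; lra. }
  assert (I2 : 0 < RInt g u v).
  { apply RInt_gt_0. auto.
    - intros x Hx. assert (Rabs (x - t0) < d).
      { unfold u, v, Rmax, Rmin in Hx. repeat destruct Rle_dec in Hx; split_Rabs; lra. }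
      specialize (Hdd x H). split_Rabs; lra.
    - intros; apply Hc; lra. }
  rewrite <- (RInt_ChaslesR g 0 u 1), <- (RInt_ChaslesR g u v 1).
  lra. all: apply ex_RInt01; auto; lra.
Qed.

Lemma int_nz (g : R -> R) :
  (forall t, 0 <= t <= 1 -> continuous g t) ->
  ((forall t, 0 <= t <= 1 -> 0 <= g t) \/ (forall t, 0 <= t <= 1 -> g t <= 0)) ->
  (exists t, 0 <= t <= 1 /\ g t <> 0) -> RInt g 0 1 <> 0.
Proof.
  intros Hc [Hp|Hp] Hn.
  - apply Rgt_not_eq. apply int_pos; auto.
  - assert (0 < RInt (fun t => -1 * g t) 0 1).
    { apply int_pos.
      - intros. apply contR_mult. apply continuous_const. auto.
      - intros. specialize (Hp t H). lra.
      - destruct Hn as [t [Ht Hn]]. exists t. split; auto. lra. }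
    rewrite RInt_scalR in H. lra. apply ex_RInt01; auto; lra.
Qed.

Lemma int_ge (g : R -> R) a b : 0 <= a <= b -> b <= 1 ->
  (forall t, 0 <= t <= 1 -> continuous g t) ->
  (forall t, 0 <= t <= 1 -> 0 <= g t) -> 0 <= RInt g a b.
Proof. intros. apply RInt_ge_0. lra. apply ex_RInt01; auto; lra. intros; apply H2; lra. Qed.

Lemma int_le (g : R -> R) a b : 0 <= a <= b -> b <= 1 ->
  (forall t, 0 <= t <= 1 -> continuous g t) ->
  (forall t, 0 <= t <= 1 -> g t <= 0) -> RInt g a b <= 0.
Proof.
  intros. assert (0 <= RInt (fun t => -1 * g t) a b).
  { apply int_ge; auto. intros. apply contR_mult. apply continuous_const. auto.
    intros. specialize (H2 t H3). lra. }
  rewrite RInt_scalR in H3. lra. apply ex_RInt01; auto; lra.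
Qed.

Lemma sign_const (g : R -> R) :
  (forall t, 0 <= t <= 1 -> continuous g t) ->
  (forall t, 0 <= t <= 1 -> g t <> 0) ->
  (forall t, 0 <= t <= 1 -> 0 < g t) \/ (forall t, 0 <= t <= 1 -> g t < 0).
Proof.
  intros Hc Hn.
  set (gh := fun s => g (cl01 s)).
  assert (Hgh : continuity gh).
  { intros s. apply continuity_pt_filterlim. unfold gh.
    apply (contR_comp cl01 g). apply cl01_cont. apply Hc, cl01_in. }
  assert (E : forall t, 0 <= t <= 1 -> gh t = g t).
  { intros; unfold gh; rewrite cl01_id; auto. }
  assert (H0 : 0 <= 0 <= 1) by lra.
  destruct (Rlt_or_le 0 (g 0)) as [Hp|Hp].
  - left. intros t Ht. destruct (Rlt_or_le 0 (g t)) as [H|H]; auto.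
    exfalso. assert (g t < 0) by (specialize (Hn t Ht); lra).
    destruct (IVT_gen gh 0 t 0 Hgh) as [x [Hx Hx0]].
    { rewrite !E by auto. unfold Rmin, Rmax; destruct Rle_dec; lra. }
    assert (0 <= x <= 1) by (unfold Rmin, Rmax in Hx; destruct Rle_dec; lra).
    rewrite E in Hx0 by auto. apply (Hn x); auto.
  - right. assert (g 0 < 0) by (specialize (Hn 0 H0); lra).
    intros t Ht. destruct (Rlt_or_le (g t) 0) as [H1|H1]; auto.
    exfalso. assert (0 < g t) by (specialize (Hn t Ht); lra).
    destruct (IVT_gen gh 0 t 0 Hgh) as [x [Hx Hx0]].
    { rewrite !E by auto. unfold Rmin, Rmax; destruct Rle_dec; lra. }
    assert (0 <= x <= 1) by (unfold Rmin, Rmax in Hx; destruct Rle_dec; lra).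
    rewrite E in Hx0 by auto. apply (Hn x); auto.
Qed.

Lemma bounded01 (g : R -> R) :
  (forall t, 0 <= t <= 1 -> continuous g t) -> exists M, 0 <= M /\ forall t, 0 <= t <= 1 -> Rabs (g t) <= M.
Proof.
  intros Hc.
  destruct (continuity_ab_maj (fun t => Rabs (g t)) 0 1) as [m [Hm Hm1]]. lra.
  { intros c Hc'. apply continuity_pt_comp with (f1 := g) (f2 := Rabs).
    apply continuity_pt_filterlim, Hc, Hc'. apply Rcontinuity_abs. }
  exists (Rabs (g m)). split. apply Rabs_pos. auto.
Qed.

Lemma is_derive_val (f : R -> R) (x l l' : R) : is_derive f x l -> l = l' -> is_derive f x l'.
Proof. intros H ->; exact H. Qed.

Definition cub (al be ga : R -> R) (t z : R) := al t * z ^ 3 + be t * z ^ 2 + ga t * z.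

Lemma cub_diff (al be ga u v : R -> R) :
  (forall t, ex_derive al t) -> (forall t, ex_derive be t) -> (forall t, ex_derive ga t) ->
  (forall t, 0 <= t <= 1 -> is_derive u t (cub al be ga t (u t))) ->
  (forall t, 0 <= t <= 1 -> is_derive v t (cub al be ga t (v t))) ->
  forall t, 0 <= t <= 1 -> u t - v t = (u 0 - v 0) *
    exp (RInt (fun s => al s * (u s ^ 2 + u s * v s + v s ^ 2) + be s * (u s + v s) + ga s) 0 t).
Proof.
  intros Ha Hb Hg Hu Hv.
  apply (lin_hom (fun s => u s - v s)).
  - intros t Ht. apply exd_cont. specialize (Hu t Ht). specialize (Hv t Ht).
    auto_derive. repeat split; auto; eexists; eauto.
  - intros t Ht. specialize (Hu t Ht). specialize (Hv t Ht).
    assert (H := is_derive_minus u v t _ _ Hu Hv).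
    eapply is_derive_val. exact H. unfold cub, minus, plus, opp; simpl. ring.
Qed.

Lemma RInt_comb3 (f1 f2 f3 : R -> R) (c1 c2 c3 a b : R) :
  ex_RInt f1 a b -> ex_RInt f2 a b -> ex_RInt f3 a b ->
  @eq R (RInt (fun t => c1 * f1 t + c2 * f2 t + c3 * f3 t) a b)
  (c1 * RInt f1 a b + c2 * RInt f2 a b + c3 * RInt f3 a b).
Proof.
  intros H1 H2 H3.
  assert (E1 : ex_RInt (fun t => c1 * f1 t) a b) by (apply (ex_RInt_scal f1 a b c1); auto).
  assert (E2 : ex_RInt (fun t => c2 * f2 t) a b) by (apply (ex_RInt_scal f2 a b c2); auto).
  assert (E3 : ex_RInt (fun t => c3 * f3 t) a b) by (apply (ex_RInt_scal f3 a b c3); auto).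
  rewrite (RInt_plusR (fun t => c1 * f1 t + c2 * f2 t) (fun t => c3 * f3 t)); auto.
  rewrite (RInt_plusR (fun t => c1 * f1 t) (fun t => c2 * f2 t)); auto.
  rewrite !RInt_scalR; auto.
  apply (ex_RInt_plus (fun t => c1 * f1 t) (fun t => c2 * f2 t)); auto.
Qed.

Lemma RInt_extR (f g : R -> R) (a b : R) :
  (forall x : R, Rmin a b < x < Rmax a b -> f x = g x) -> @eq R (RInt f a b) (RInt g a b).
Proof. intros H. apply RInt_ext. exact H. Qed.

Lemma contR_plus (f g : R->R) x : continuous f x -> continuous g x -> continuous (fun y => f y + g y) x.
Proof. intros. apply continuity_pt_filterlim. apply continuity_pt_plus; apply continuity_pt_filterlim; auto. Qed.

Lemma log_per (q k : R -> R) :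
  (forall t, 0 <= t <= 1 -> continuous k t) ->
  (forall t, 0 <= t <= 1 -> is_derive q t (k t * q t)) ->
  q 1 = q 0 -> q 0 <> 0 -> RInt k 0 1 = 0.
Proof.
  intros Hk Hq Hp Hn.
  assert (H := lin_hom q k Hk Hq 1 ltac:(lra)).
  rewrite Hp in H. apply exp_inv. rewrite exp_0.
  apply Rmult_eq_reg_l with (q 0); auto. lra.
Qed.

Lemma ftc_per (q r : R -> R) :
  (forall t, 0 <= t <= 1 -> continuous r t) ->
  (forall t, 0 <= t <= 1 -> is_derive q t (r t)) ->
  q 1 = q 0 -> RInt r 0 1 = 0.
Proof.
  intros Hr Hq Hp.
  assert (H : is_RInt r 0 1 (minus (q 1) (q 0))).
  { apply (is_RInt_derive (V:=R_CompleteNormedModule) q).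
    - intros x Hx. apply Hq. unfold Rmin, Rmax in Hx; destruct Rle_dec; lra.
    - intros x Hx. apply Hr. unfold Rmin, Rmax in Hx; destruct Rle_dec; lra. }
  apply (is_RInt_unique (V:=R_CompleteNormedModule)) in H. rewrite H, Hp.
  unfold minus, plus, opp; simpl. ring.
Qed.

Lemma weight_nz (P w : R -> R) :
  (forall t, 0 <= t <= 1 -> continuous P t) ->
  (forall t, 0 <= t <= 1 -> continuous w t) ->
  ((forall t, 0 <= t <= 1 -> 0 <= P t) \/ (forall t, 0 <= t <= 1 -> P t <= 0)) ->
  (exists t, 0 <= t <= 1 /\ P t <> 0) ->
  (forall t, 0 <= t <= 1 -> w t <> 0) ->
  RInt (fun t => P t * w t) 0 1 <> 0.
Proof.
  intros HcP Hcw HP HPn Hw.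
  apply int_nz.
  - intros; apply contR_mult; auto.
  - destruct (sign_const w Hcw Hw) as [Hs|Hs]; destruct HP as [Hp|Hp].
    + left; intros t Ht; specialize (Hs t Ht); specialize (Hp t Ht); nra.
    + right; intros t Ht; specialize (Hs t Ht); specialize (Hp t Ht); nra.
    + right; intros t Ht; specialize (Hs t Ht); specialize (Hp t Ht); nra.
    + left; intros t Ht; specialize (Hs t Ht); specialize (Hp t Ht); nra.
  - destruct HPn as [t [Ht Hn]]. exists t. split; auto.
Qed.

Lemma is_derive_constR (c x : R) : is_derive (fun _ : R => c) x 0.
Proof. apply (is_derive_const (K:=R_AbsRing) (V:=R_NormedModule)). Qed.

Section Abel0.
Variables al be : R -> R.
Hypothesis Hal : forall t, ex_derive al t.
Hypothesis Hbe : forall t, ex_derive be t.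
Variables a b : R.
Let P := fun t => a * al t + b * be t.
Hypothesis HPs : (forall t, 0 <= t <= 1 -> 0 <= P t) \/ (forall t, 0 <= t <= 1 -> P t <= 0).
Hypothesis HPn : exists t, 0 <= t <= 1 /\ P t <> 0.

Let z0 := fun _ : R => 0.
Lemma z0d t : ex_derive z0 t.
Proof. unfold z0. auto_derive. auto. Qed.

Definition psol (y : R -> R) :=
  (forall t, 0 <= t <= 1 -> is_derive y t (cub al be z0 t (y t))) /\ y 0 = y 1 /\ y 0 <> 0.

Lemma psol_d y : psol y -> forall t, 0 <= t <= 1 -> ex_derive y t.
Proof. intros [H _] t Ht. eexists; apply H; auto. Qed.

Lemma psol_nz y : psol y -> forall t, 0 <= t <= 1 -> y t <> 0.
Proof.
  intros Hy t Ht.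
  assert (H := cub_diff al be z0 y z0 Hal Hbe z0d (proj1 Hy)).
  assert (Hz : forall t, 0 <= t <= 1 -> is_derive z0 t (cub al be z0 t (z0 t))).
  { intros. unfold cub, z0. eapply is_derive_val. apply is_derive_constR. ring. }
  specialize (H Hz t Ht). unfold z0 in H. rewrite !Rminus_0_r in H. rewrite H.
  apply Rmult_integral_contrapositive; split. apply Hy. apply Rgt_not_eq, exp_pos.
Qed.

Ltac cont_tac Hd Hn := apply exd_cont; auto_derive; repeat split; auto; try apply Hd; auto; try apply Hn; auto.

Section OneSol.
Variable y : R -> R.
Hypothesis Hy : psol y.
Let Hyd := psol_d y Hy.
Let Hyn := psol_nz y Hy.
Let Hyv := proj1 Hy.

Lemma E1 : RInt (fun t => al t * y t ^ 2 + be t * y t) 0 1 = 0.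
Proof.
  apply (log_per y).
  - intros t Ht. cont_tac Hyd Hyn.
  - intros t Ht. eapply is_derive_val. apply Hyv; auto. unfold cub, z0. ring.
  - symmetry; apply Hy.
  - apply Hy.
Qed.

Lemma E2 : RInt (fun t => al t * y t + be t) 0 1 = 0.
Proof.
  apply (ftc_per (fun t => - / y t)).
  - intros t Ht. cont_tac Hyd Hyn.
  - intros t Ht. assert (H := Hyv t Ht). specialize (Hyn t Ht).
    auto_derive_fun (fun t => - / y t). intros HH.
    assert (HH' := HH t (conj (ex_intro _ _ H) (conj Hyn I))).
    eapply is_derive_val. exact HH'.
    rewrite (Derive_of _ _ _ H). unfold cub, z0. field. auto.
  - rewrite (proj1 (proj2 Hy)). reflexivity.
Qed.

Ltac dtac := match goal with |- is_derive ?f ?x _ => let HH := fresh "HH" in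
  auto_derive_fun f; intro HH; refine (is_derive_val _ _ _ _ (HH x _) _); clear HH end.

Lemma E3 : RInt (fun t => al t + be t / y t) 0 1 = 0.
Proof.
  apply (ftc_per (fun t => - / (2 * y t ^ 2))).
  - intros t Ht. cont_tac Hyd Hyn.
  - intros t Ht. assert (H := Hyv t Ht). specialize (Hyn t Ht).
    dtac. split. eexists; eauto. split; auto. intros HH. apply Hyn. nra.
    rewrite (Derive_of _ _ _ H). unfold cub, z0. field. auto.
  - rewrite (proj1 (proj2 Hy)). reflexivity.
Qed.

Let Q := fun t => a - b * y t.

Lemma Qnz : forall t, 0 <= t <= 1 -> Q t <> 0.
Proof.
  assert (HL := lin_affine Q (fun t => al t * y t ^ 2) (fun t => - (y t ^ 2 * P t))).
  assert (Hk : forall t, 0 <= t <= 1 -> continuous (fun t => al t * y t ^ 2) t).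
  { intros t Ht. cont_tac Hyd Hyn. }
  assert (Hb : forall t, 0 <= t <= 1 -> continuous (fun t => - (y t ^ 2 * P t)) t).
  { intros t Ht. unfold P. cont_tac Hyd Hyn. }
  assert (Hd : forall t, 0 <= t <= 1 -> is_derive Q t (al t * y t ^ 2 * Q t + - (y t ^ 2 * P t))).
  { intros t Ht. assert (H := Hyv t Ht). unfold Q. dtac. repeat split; eexists; eauto.
    rewrite (Derive_of _ _ _ H). unfold cub, z0, P. ring. }
  specialize (HL Hk Hb Hd).
  set (Kh := fun s => RInt (fun u => al (cl01 u) * y (cl01 u) ^ 2) 0 s) in HL.
  assert (HKh := Kh_der _ Hk).
  set (g := fun s => - (y s ^ 2 * P s) * exp (- Kh s)) in HL.
  assert (Hg : forall t, 0 <= t <= 1 -> continuous g t).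
  { intros t Ht. unfold g. apply contR_mult. auto.
    apply exd_cont. auto_derive. eexists; apply HKh. }
  assert (Hgs : (forall t, 0 <= t <= 1 -> 0 <= g t) \/ (forall t, 0 <= t <= 1 -> g t <= 0)).
  { unfold g. destruct HPs as [Hp|Hp]; [right|left]; intros t Ht; specialize (Hp t Ht);
    assert (0 < exp (- Kh t)) by apply exp_pos; assert (0 <= y t ^ 2) by (apply pow2_ge_0).
    - assert (0 <= y t ^ 2 * P t) by (apply Rmult_le_pos; auto).
      revert H1 H. generalize (y t ^ 2 * P t) (exp (- Kh t)). intros; nra.
    - assert (y t ^ 2 * P t <= 0) by nra.
      revert H1 H. generalize (y t ^ 2 * P t) (exp (- Kh t)). intros; nra. }
  assert (Hgn : exists t, 0 <= t <= 1 /\ g t <> 0).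
  { destruct HPn as [t [Ht Hn]]. exists t. split; auto. unfold g.
    assert (0 < exp (- Kh t)) by apply exp_pos.
    assert (0 < y t ^ 2) by (apply pow2_gt_0; apply Hyn; auto).
    intro HH. apply Hn. apply Rmult_integral in HH. destruct HH as [HH|HH]; [|lra].
    assert (y t ^ 2 * P t = 0) by lra. apply Rmult_integral in H1. destruct H1; lra. }
  assert (HI1 := int_nz g Hg Hgs Hgn).
  intros t0 Ht0 HQ.
  assert (Ha := HL t0 Ht0). rewrite HQ, Rmult_0_l in Ha.
  assert (Hb1 := HL 1 ltac:(lra)).
  assert (HQ1 : Q 1 = Q 0) by (unfold Q; rewrite (proj1 (proj2 Hy)); reflexivity).
  rewrite HQ1 in Hb1.
  assert (He : 0 < exp (- RInt (fun t => al t * y t ^ 2) 0 1)) by apply exp_pos.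
  assert (Hc : RInt g 0 t0 + RInt g t0 1 = RInt g 0 1) by (apply RInt_ChaslesR; apply ex_RInt01; auto; lra).
  destruct Hgs as [Hs|Hs].
  - assert (0 <= RInt g 0 t0) by (apply int_ge; auto; lra).
    assert (0 <= RInt g t0 1) by (apply int_ge; auto; lra).
    assert (0 <= RInt g 0 1) by (apply int_ge; auto; lra).
    nra.
  - assert (RInt g 0 t0 <= 0) by (apply int_le; auto; lra).
    assert (RInt g t0 1 <= 0) by (apply int_le; auto; lra).
    assert (RInt g 0 1 <= 0) by (apply int_le; auto; lra).
    nra.
Qed.

Lemma E4 : RInt (fun t => al t * y t ^ 2 - y t ^ 2 * P t / Q t) 0 1 = 0.
Proof.
  assert (HQn := Qnz).
  apply (log_per Q).
  - intros t Ht. specialize (HQn t Ht). unfold Q, P in *. cont_tac Hyd Hyn.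
  - intros t Ht. specialize (HQn t Ht). assert (H := Hyv t Ht). unfold Q. dtac.
    eexists; eauto.
    rewrite (Derive_of _ _ _ H). unfold cub, z0, P. unfold Q in HQn. field. auto.
  - unfold Q; rewrite (proj1 (proj2 Hy)). reflexivity.
  - apply HQn; lra.
Qed.

Lemma Hyp_nz : RInt (fun t => 3 * al t * y t ^ 2 + 2 * be t * y t) 0 1 <> 0.
Proof.
  assert (HQn := Qnz).
  assert (C1 : forall t, 0 <= t <= 1 -> continuous (fun t => al t * y t ^ 2 + be t * y t) t).
  { intros t Ht. cont_tac Hyd Hyn. }
  assert (C2 : forall t, 0 <= t <= 1 -> continuous (fun t => al t * y t ^ 2 - y t ^ 2 * P t / Q t) t).
  { intros t Ht. specialize (HQn t Ht). unfold Q, P in *. cont_tac Hyd Hyn. }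
  assert (C3 : forall t, 0 <= t <= 1 -> continuous (fun t => P t * (y t ^ 2 / Q t)) t).
  { intros t Ht. specialize (HQn t Ht). unfold Q, P in *. cont_tac Hyd Hyn. }
  rewrite (RInt_extR _ (fun t => 2 * (al t * y t ^ 2 + be t * y t) + 1 * (al t * y t ^ 2 - y t ^ 2 * P t / Q t)
     + 1 * (P t * (y t ^ 2 / Q t)))).
  2:{ intros x Hx. assert (0 <= x <= 1) by (unfold Rmin, Rmax in Hx; destruct Rle_dec; lra).
      specialize (HQn x H). field. auto. }
  rewrite RInt_comb3 by (apply ex_RInt01; auto; lra).
  rewrite E1, E4 by auto. rewrite Rmult_0_r, Rmult_0_r, !Rplus_0_l, Rmult_1_l.
  apply weight_nz; auto.
  - intros t Ht. unfold P. cont_tac Hyd Hyn.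
  - intros t Ht. specialize (HQn t Ht). unfold Q in *. cont_tac Hyd Hyn.
  - intros s Hs. specialize (HQn s Hs). assert (Hys := Hyn s Hs).
    assert (0 < y s ^ 2) by (apply pow2_gt_0; auto).
    unfold Rdiv. apply Rmult_integral_contrapositive_currified. lra. apply Rinv_neq_0_compat. auto.
Qed.

Lemma E5 : a <> 0 -> @eq R (RInt (fun t => P t * (y t / Q t)) 0 1) (- RInt be 0 1).
Proof.
  intros Ha. assert (HQn := Qnz).
  assert (C1 : forall t, 0 <= t <= 1 -> continuous (fun t => al t * y t ^ 2 + be t * y t) t).
  { intros t Ht. cont_tac Hyd Hyn. }
  assert (C2 : forall t, 0 <= t <= 1 -> continuous (fun t => al t * y t ^ 2 - y t ^ 2 * P t / Q t) t).
  { intros t Ht. specialize (HQn t Ht). unfold Q, P in *. cont_tac Hyd Hyn. }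
  assert (C0 : forall t, 0 <= t <= 1 -> continuous (fun t => al t * y t + be t) t).
  { intros t Ht. cont_tac Hyd Hyn. }
  assert (Cb : forall t, 0 <= t <= 1 -> continuous be t).
  { intros t Ht. apply exd_cont; auto. }
  rewrite (RInt_extR _ (fun t => (1 * (al t * y t + be t) + (b / a) * (al t * y t ^ 2 + be t * y t)
     + (- (b / a)) * (al t * y t ^ 2 - y t ^ 2 * P t / Q t)) - be t)).
  2:{ intros x Hx. assert (0 <= x <= 1) by (unfold Rmin, Rmax in Hx; destruct Rle_dec; lra).
      specialize (HQn x H). unfold P, Q in *. field. auto. }
  rewrite RInt_minusR. rewrite RInt_comb3 by (apply ex_RInt01; auto; lra).
  rewrite E1, E2, E4. ring.
  apply ex_RInt01; auto; try lra. intros t Ht.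
  apply contR_plus. apply contR_plus. apply contR_mult. apply continuous_const. auto.
  apply contR_mult. apply continuous_const. auto.
  apply contR_mult. apply continuous_const. auto.
  apply ex_RInt01; auto; lra.
Qed.
End OneSol.

Lemma uniq0 y1 y2 : psol y1 -> psol y2 -> y1 0 = y2 0.
Proof.
  intros H1 H2. destruct (Req_dec (y1 0) (y2 0)) as [E|Hne]; auto. exfalso.
  assert (Hd : forall t, 0 <= t <= 1 -> y1 t - y2 t <> 0).
  { intros t Ht. rewrite (cub_diff al be z0 y1 y2 Hal Hbe z0d (proj1 H1) (proj1 H2) t Ht).
    apply Rmult_integral_contrapositive_currified. lra. apply Rgt_not_eq, exp_pos. }
  assert (Y1 := psol_nz y1 H1). assert (Y2 := psol_nz y2 H2).
  assert (D1 := psol_d y1 H1). assert (D2 := psol_d y2 H2).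
  assert (CP : forall t, 0 <= t <= 1 -> continuous P t).
  { intros t Ht. unfold P. apply exd_cont. auto_derive. auto. }
  destruct (Req_dec a 0) as [Ha|Ha].
  - assert (Hb : b <> 0).
    { intros Hb. destruct HPn as [t [Ht Hn]]. apply Hn. unfold P. rewrite Ha, Hb. ring. }
    assert (HI : @eq R (RInt (fun t => P t * (1 / y1 t - 1 / y2 t)) 0 1) 0).
    { assert (A1 := E3 y1 H1). assert (A2 := E3 y2 H2).
      rewrite (RInt_extR _ (fun t => b * ((al t + be t / y1 t) - (al t + be t / y2 t)))).
      rewrite RInt_scalR, RInt_minusR, A1, A2. ring.
      apply ex_RInt01; auto; try lra. intros t Ht. specialize (Y1 t Ht). cont_tac D1 Y1.
      apply ex_RInt01; auto; try lra. intros t Ht. specialize (Y2 t Ht). cont_tac D2 Y2.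
      apply ex_RInt01; auto; try lra. intros t Ht. specialize (Y1 t Ht). specialize (Y2 t Ht).
      apply exd_cont; auto_derive; repeat split; auto; try apply D1; try apply D2; auto.
      intros x Hx. assert (0 <= x <= 1) by (unfold Rmin, Rmax in Hx; destruct Rle_dec; lra).
      specialize (Y1 x H). specialize (Y2 x H). unfold P. rewrite Ha. field. auto. }
    revert HI. apply weight_nz; auto.
    + intros t Ht. specialize (Y1 t Ht). specialize (Y2 t Ht).
      apply exd_cont; auto_derive; repeat split; auto; try apply D1; try apply D2; auto.
    + intros t Ht. specialize (Y1 t Ht). specialize (Y2 t Ht). specialize (Hd t Ht).
      replace (1 / y1 t - 1 / y2 t) with ((y2 t - y1 t) / (y1 t * y2 t)) by (field; auto).
      unfold Rdiv. apply Rmult_integral_contrapositive_currified. lra.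
      apply Rinv_neq_0_compat. apply Rmult_integral_contrapositive_currified; auto.
  - assert (Q1 := Qnz y1 H1). assert (Q2 := Qnz y2 H2).
    assert (HI : @eq R (RInt (fun t => P t * (y1 t / (a - b * y1 t) - y2 t / (a - b * y2 t))) 0 1) 0).
    { assert (A1 := E5 y1 H1 Ha). assert (A2 := E5 y2 H2 Ha).
      rewrite (RInt_extR _ (fun t => P t * (y1 t / (a - b * y1 t)) - P t * (y2 t / (a - b * y2 t)))).
      rewrite RInt_minusR, A1, A2. ring.
      apply ex_RInt01; auto; try lra. intros t Ht. specialize (Y1 t Ht). specialize (Q1 t Ht).
      unfold P. cont_tac D1 Y1.
      apply ex_RInt01; auto; try lra. intros t Ht. specialize (Y2 t Ht). specialize (Q2 t Ht).
      unfold P. cont_tac D2 Y2.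
      intros x Hx. ring. }
    revert HI. apply weight_nz; auto.
    + intros t Ht. specialize (Q1 t Ht). specialize (Q2 t Ht).
      apply exd_cont; auto_derive; repeat split; auto; try apply D1; try apply D2; auto.
    + intros t Ht. specialize (Q1 t Ht). specialize (Q2 t Ht). specialize (Hd t Ht).
      replace (y1 t / (a - b * y1 t) - y2 t / (a - b * y2 t))
        with (a * (y1 t - y2 t) / ((a - b * y1 t) * (a - b * y2 t))) by (field; auto).
      unfold Rdiv. apply Rmult_integral_contrapositive_currified.
      apply Rmult_integral_contrapositive_currified; auto.
      apply Rinv_neq_0_compat. apply Rmult_integral_contrapositive_currified; auto.
Qed.
End Abel0.

Lemma contR_minus (f g : R->R) x : continuous f x -> continuous g x -> continuous (fun y => f y - g y) x.
Proof. intros. apply continuity_pt_filterlim. apply continuity_pt_minus; apply continuity_pt_filterlim; auto. Qed.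

Lemma contR_pow (g : R -> R) x n : continuous g x -> continuous (fun y => g y ^ n) x.
Proof.
  intros H. induction n. simpl. apply continuous_const.
  simpl. apply contR_mult; auto.
Qed.

Lemma int_der (g : R -> R) : (forall s, continuous g s) ->
  forall t, is_derive (fun t => RInt g 0 t) t (g t).
Proof.
  intros Hg t. apply (is_derive_RInt (V:=R_NormedModule) g _ 0). apply filter_forall. intros b.
  apply (RInt_correct (V:=R_CompleteNormedModule)). apply (ex_RInt_continuous (V:=R_CompleteNormedModule)). intros; apply Hg. apply Hg.
Qed.

Lemma exR (g : R -> R) a b : (forall s, continuous g s) -> ex_RInt g a b.
Proof. intros. apply (ex_RInt_continuous (V:=R_CompleteNormedModule)). intros; auto. Qed.

Lemma RInt_swapR (g : R -> R) s t : ex_RInt g t s -> @eq R (RInt g s t) (- RInt g t s).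
Proof.
  intros H. rewrite <- (opp_RInt_swap g t s H). reflexivity.
Qed.

Lemma RInt_abs_bound0 (g h : R -> R) s t : s <= t -> (forall u, continuous g u) -> (forall u, continuous h u) ->
  (forall u, Rabs (g u) <= h u) -> Rabs (RInt g s t) <= Rabs (RInt h s t).
Proof.
  intros Hst Hg Hh Hb.
  assert (Hh0 : forall u, 0 <= h u) by (intros u; eapply Rle_trans; [apply Rabs_pos|apply Hb]).
  assert (Ea : ex_RInt (fun u => Rabs (g u)) s t).
  { apply (ex_RInt_continuous (V:=R_CompleteNormedModule)). intros; apply (contR_comp g Rabs); auto.
    apply continuity_pt_filterlim. apply Rcontinuity_abs. }
  assert (H1 := abs_RInt_le g s t Hst (exR g s t Hg)).
  assert (H2 := RInt_le (fun u => Rabs (g u)) h s t Hst Ea (exR h s t Hh) (fun u _ => Hb u)).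
  assert (0 <= RInt h s t) by (apply RInt_ge_0; auto; apply exR; auto).
  rewrite (Rabs_pos_eq (RInt h s t)) by auto. lra.
Qed.

Lemma RInt_abs_bound (g h : R -> R) s t : (forall u, continuous g u) -> (forall u, continuous h u) ->
  (forall u, Rabs (g u) <= h u) -> Rabs (RInt g s t) <= Rabs (RInt h s t).
Proof.
  intros Hg Hh Hb.
  destruct (Rle_or_lt s t) as [Hst|Hst].
  - apply RInt_abs_bound0; auto.
  - rewrite (RInt_swapR g s t), (RInt_swapR h s t) by (apply exR; auto). rewrite !Rabs_Ropp.
    apply RInt_abs_bound0; auto. lra.
Qed.

Lemma RInt_const_R (c s t : R) : @eq R (RInt (fun _ => c) s t) (c * (t - s)).
Proof. rewrite RInt_const. unfold scal; simpl; unfold mult; simpl. ring. Qed.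

Lemma int_exp_pos (c l t : R) : 0 < l -> 0 <= t ->
  @eq R (RInt (fun u => c * exp (l * u)) 0 t) (c / l * (exp (l * t) - 1)).
Proof.
  intros Hl Ht.
  assert (H : is_RInt (fun u => c * exp (l * u)) 0 t (minus (c / l * exp (l * t)) (c / l * exp (l * 0)))).
  { apply (is_RInt_derive (V:=R_CompleteNormedModule) (fun u => c / l * exp (l * u))).
    - intros x _. auto_derive. auto. field. lra.
    - intros x _. apply exd_cont. auto_derive. auto. }
  apply (is_RInt_unique (V:=R_CompleteNormedModule)) in H. rewrite H.
  unfold minus, plus, opp; simpl. rewrite Rmult_0_r, exp_0. ring.
Qed.

Lemma int_exp_neg (c l t : R) : 0 < l -> t <= 0 ->
  @eq R (RInt (fun u => c * exp (- l * u)) 0 t) (- (c / l) * (exp (- l * t) - 1)).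
Proof.
  intros Hl Ht.
  assert (H : is_RInt (fun u => c * exp (- l * u)) 0 t (minus (- (c / l) * exp (- l * t)) (- (c / l) * exp (- l * 0)))).
  { apply (is_RInt_derive (V:=R_CompleteNormedModule) (fun u => - (c / l) * exp (- l * u))).
    - intros x _. auto_derive. auto. field. lra.
    - intros x _. apply exd_cont. auto_derive. auto. }
  apply (is_RInt_unique (V:=R_CompleteNormedModule)) in H. rewrite H.
  unfold minus, plus, opp; simpl. rewrite Rmult_0_r, exp_0. ring.
Qed.

Lemma int_exp_abs (c l t : R) : 0 <= c -> 0 < l ->
  Rabs (RInt (fun u => c * exp (l * Rabs u)) 0 t) = c / l * (exp (l * Rabs t) - 1).
Proof.
  intros Hc Hl.
  assert (Hcl : 0 <= c / l) by (apply Rdiv_le_0_compat; lra).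
  destruct (Rle_or_lt 0 t) as [Ht|Ht].
  - rewrite (RInt_extR _ (fun u => c * exp (l * u))).
    2:{ intros x Hx. unfold Rmin, Rmax in Hx; destruct Rle_dec; try lra. rewrite Rabs_pos_eq; lra. }
    rewrite int_exp_pos by auto. rewrite (Rabs_pos_eq t) by auto.
    assert (1 <= exp (l * t)). { pose proof (exp_ineq1_le (l * t)). nra. }
    apply Rabs_pos_eq. nra.
  - rewrite (RInt_extR _ (fun u => c * exp (- l * u))).
    2:{ intros x Hx. unfold Rmin, Rmax in Hx; destruct Rle_dec; try lra. rewrite Rabs_left by lra.
        f_equal. f_equal. ring. }
    rewrite int_exp_neg by lra. rewrite (Rabs_left t) by auto.
    assert (1 <= exp (- l * t)). { pose proof (exp_ineq1_le (- l * t)). nra. }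
    rewrite Rabs_left1 by nra. replace (l * - t) with (- l * t) by ring. ring.
Qed.

Lemma vanish (X Y C : R) : (forall n, X <= Y + C * (1/2) ^ n) -> X <= Y.
Proof.
  intros H. destruct (Rle_or_lt C 0) as [HC|HC].
  - specialize (H 0%nat). simpl in H. lra.
  - destruct (Rle_or_lt X Y) as [|HXY]; auto. exfalso.
    destruct (pow_lt_1_zero (1/2) ltac:(rewrite Rabs_pos_eq; lra) ((X - Y) / C)) as [N HN].
    apply Rdiv_lt_0_compat; lra.
    specialize (HN N (le_n N)). specialize (H N).
    rewrite Rabs_pos_eq in HN by (apply pow_le; lra).
    apply (Rmult_lt_compat_l C) in HN; auto.
    replace (C * ((X - Y) / C)) with (X - Y) in HN by (field; lra). lra.
Qed.

Lemma lim_tail (u : nat -> R) (l a B : R) (n : nat) : is_lim_seq u l ->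
  (forall k, Rabs (u (n + k)%nat - a) <= B) -> Rabs (l - a) <= B.
Proof.
  intros Hl Hb. apply is_lim_seq_spec in Hl.
  destruct (Rle_or_lt (Rabs (l - a)) B) as [|HB]; auto. exfalso.
  assert (He : 0 < Rabs (l - a) - B) by lra.
  destruct (Hl (mkposreal _ He)) as [N HN]. simpl in HN.
  specialize (HN (n + N)%nat ltac:(lia)). specialize (Hb N).
  assert (Rabs (l - a) <= Rabs (u (n + N)%nat - l) + Rabs (u (n + N)%nat - a)).
  { replace (l - a) with (- (u (n + N)%nat - l) + (u (n + N)%nat - a)) by ring.
    eapply Rle_trans. apply Rabs_triang. rewrite Rabs_Ropp. lra. }
  lra.
Qed.

Lemma pow_bound (w K : R) n : Rabs w <= K -> Rabs (w ^ n) <= K ^ n.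
Proof. intros H. rewrite <- RPow_abs. apply pow_incr. split; auto. apply Rabs_pos. Qed.

Section Picard.
Variables al be ga : R -> R.
Hypothesis Hal : forall t, ex_derive al t.
Hypothesis Hbe : forall t, ex_derive be t.
Hypothesis Hga : forall t, ex_derive ga t.
Variables Ma Mb Mg Kx : R.
Hypothesis HMa : forall t, 0 <= t <= 1 -> Rabs (al t) <= Ma.
Hypothesis HMb : forall t, 0 <= t <= 1 -> Rabs (be t) <= Mb.
Hypothesis HMg : forall t, 0 <= t <= 1 -> Rabs (ga t) <= Mg.
Hypothesis HKx : 0 <= Kx.
Hypothesis HMa0 : 0 <= Ma.
Hypothesis HMb0 : 0 <= Mb.
Hypothesis HMg0 : 0 <= Mg.

Definition KK := Kx + 1.
Definition clK (z : R) := Rmin KK (Rmax (- KK) z).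
Definition MM := Ma * KK ^ 3 + Mb * KK ^ 2 + Mg * KK.
Definition LL := 3 * Ma * KK ^ 2 + 2 * Mb * KK + Mg + 1.
Definition lam := 2 * LL.
Definition FF (t z : R) := cub al be ga (cl01 t) (clK z).

Lemma KK_pos : 1 <= KK. Proof. unfold KK; lra. Qed.
Lemma MM_pos : 0 <= MM.
Proof. unfold MM. pose proof KK_pos. assert (0 <= KK ^ 2) by (apply pow_le; lra).
  assert (0 <= KK ^ 3) by (apply pow_le; lra). nra. Qed.
Lemma LL_pos : 1 <= LL.
Proof. unfold LL. pose proof KK_pos. assert (0 <= KK ^ 2) by (apply pow_le; lra). nra. Qed.
Lemma lam_pos : 0 < lam. Proof. unfold lam; pose proof LL_pos; lra. Qed.

Lemma clK_b z : Rabs (clK z) <= KK.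
Proof. pose proof KK_pos. unfold clK, Rmin, Rmax. repeat destruct Rle_dec; split_Rabs; lra. Qed.
Lemma clK_id z : Rabs z <= KK -> clK z = z.
Proof. intros. unfold clK, Rmin, Rmax. repeat destruct Rle_dec; split_Rabs; lra. Qed.
Lemma clK_lip z1 z2 : Rabs (clK z1 - clK z2) <= Rabs (z1 - z2).
Proof. pose proof KK_pos. unfold clK, Rmin, Rmax. repeat destruct Rle_dec; split_Rabs; lra. Qed.
Lemma clK_cont z : continuous clK z.
Proof. apply lip_cont with 1. intros s. rewrite Rmult_1_l. apply clK_lip. Qed.

Lemma FF_b t z : Rabs (FF t z) <= MM.
Proof.
  unfold FF, cub, MM. set (w := clK z). set (s := cl01 t).
  assert (Hs := cl01_in t). fold s in Hs.
  assert (Hw := clK_b z). fold w in Hw.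
  pose proof KK_pos.
  assert (H1 := pow_bound w KK 3 Hw). assert (H2 := pow_bound w KK 2 Hw).
  specialize (HMa s Hs). specialize (HMb s Hs). specialize (HMg s Hs).
  eapply Rle_trans. apply Rabs_triang. eapply Rle_trans. apply Rplus_le_compat_r. apply Rabs_triang.
  rewrite !Rabs_mult.
  assert (Rabs (al s) * Rabs (w ^ 3) <= Ma * KK ^ 3) by (apply Rmult_le_compat; auto; apply Rabs_pos).
  assert (Rabs (be s) * Rabs (w ^ 2) <= Mb * KK ^ 2) by (apply Rmult_le_compat; auto; apply Rabs_pos).
  assert (Rabs (ga s) * Rabs w <= Mg * KK) by (apply Rmult_le_compat; auto; apply Rabs_pos).
  lra.
Qed.

Lemma FF_lip t z1 z2 : Rabs (FF t z1 - FF t z2) <= LL * Rabs (z1 - z2).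
Proof.
  unfold FF, cub. set (w1 := clK z1). set (w2 := clK z2). set (s := cl01 t).
  assert (Hs := cl01_in t). fold s in Hs.
  assert (Hw1 := clK_b z1). fold w1 in Hw1. assert (Hw2 := clK_b z2). fold w2 in Hw2.
  assert (Hl := clK_lip z1 z2). fold w1 w2 in Hl.
  pose proof KK_pos.
  specialize (HMa s Hs). specialize (HMb s Hs). specialize (HMg s Hs).
  replace (al s * w1 ^ 3 + be s * w1 ^ 2 + ga s * w1 - (al s * w2 ^ 3 + be s * w2 ^ 2 + ga s * w2))
    with ((w1 - w2) * (al s * (w1 * w1 + w1 * w2 + w2 * w2) + be s * (w1 + w2) + ga s)) by ring.
  rewrite Rabs_mult.
  assert (B : Rabs (al s * (w1 * w1 + w1 * w2 + w2 * w2) + be s * (w1 + w2) + ga s) <= LL - 1).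
  { assert (Q1 : Rabs (w1 * w1 + w1 * w2 + w2 * w2) <= 3 * KK ^ 2).
    { eapply Rle_trans. apply Rabs_triang. eapply Rle_trans. apply Rplus_le_compat_r. apply Rabs_triang.
      rewrite !Rabs_mult.
      assert (0 <= Rabs w1) by apply Rabs_pos. assert (0 <= Rabs w2) by apply Rabs_pos.
      assert (Rabs w1 * Rabs w1 <= KK * KK) by (apply Rmult_le_compat; auto).
      assert (Rabs w1 * Rabs w2 <= KK * KK) by (apply Rmult_le_compat; auto).
      assert (Rabs w2 * Rabs w2 <= KK * KK) by (apply Rmult_le_compat; auto).
      simpl. lra. }
    assert (Q2 : Rabs (w1 + w2) <= 2 * KK) by (eapply Rle_trans; [apply Rabs_triang|lra]).
    eapply Rle_trans. apply Rabs_triang. eapply Rle_trans. apply Rplus_le_compat_r. apply Rabs_triang.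
    rewrite !Rabs_mult.
    assert (Rabs (al s) * Rabs (w1 * w1 + w1 * w2 + w2 * w2) <= Ma * (3 * KK ^ 2))
      by (apply Rmult_le_compat; auto; apply Rabs_pos).
    assert (Rabs (be s) * Rabs (w1 + w2) <= Mb * (2 * KK)) by (apply Rmult_le_compat; auto; apply Rabs_pos).
    unfold LL. lra. }
  assert (0 <= Rabs (w1 - w2)) by apply Rabs_pos.
  assert (Rabs (w1 - w2) * Rabs (al s * (w1 * w1 + w1 * w2 + w2 * w2) + be s * (w1 + w2) + ga s)
          <= Rabs (z1 - z2) * (LL - 1)) by (apply Rmult_le_compat; auto; apply Rabs_pos).
  assert (0 <= Rabs (z1 - z2)) by apply Rabs_pos.
  nra.
Qed.

Lemma FF_cont (phi : R -> R) s : continuous phi s -> continuous (fun s => FF s (phi s)) s.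
Proof.
  intros Hp. unfold FF, cub.
  assert (Ca : forall f : R -> R, (forall t, ex_derive f t) -> continuous (fun s => f (cl01 s)) s).
  { intros f Hf. apply (contR_comp cl01 f). apply cl01_cont. apply exd_cont; auto. }
  assert (Cw : continuous (fun s => clK (phi s)) s).
  { apply (contR_comp phi clK); auto. apply clK_cont. }
  apply contR_plus. apply contR_plus.
  apply contR_mult. auto. apply (contR_pow (fun s => clK (phi s))); auto.
  apply contR_mult. auto. apply (contR_pow (fun s => clK (phi s))); auto.
  apply contR_mult; auto.
Qed.


Variable z : R.

Fixpoint pic (n : nat) : R -> R :=
  match n with
  | O => fun _ => z
  | S m => fun t => z + RInt (fun s => FF s (pic m s)) 0 t
  end.

Lemma pic_cont_der : forall n, (forall t, continuous (pic n) t) /\ (forall t, is_derive (pic (S n)) t (FF t (pic n t))).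
Proof.
  induction n.
  - assert (C0 : forall t, continuous (pic 0) t) by (intros; apply continuous_const).
    split; auto. intros t. simpl.
    assert (H := int_der (fun s => FF s z) (fun s => FF_cont (fun _ => z) s (continuous_const _ _)) t).
    eapply is_derive_val. apply (is_derive_plus (fun _ => z) (fun t => RInt (fun s => FF s z) 0 t)).
    apply is_derive_constR. exact H. unfold plus; simpl. ring.
  - destruct IHn as [C D].
    assert (C' : forall t, continuous (pic (S n)) t) by (intros; apply exd_cont; eexists; apply D).
    split; auto. intros t.
    assert (H := int_der (fun s => FF s (pic (S n) s)) (fun s => FF_cont (pic (S n)) s (C' s)) t).
    eapply is_derive_val. apply (is_derive_plus (fun _ => z) (fun t => RInt (fun s => FF s (pic (S n) s)) 0 t)).
    apply is_derive_constR. exact H. unfold plus; simpl. ring.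
Qed.

Lemma pic_cont n t : continuous (pic n) t.
Proof. apply pic_cont_der. Qed.

Lemma FFp_cont n s : continuous (fun s => FF s (pic n s)) s.
Proof. apply FF_cont, pic_cont. Qed.

Lemma exp_abs_cont (c : R) u : continuous (fun u => c * exp (lam * Rabs u)) u.
Proof.
  apply contR_mult. apply continuous_const.
  apply (contR_comp (fun u => lam * Rabs u) exp). apply contR_mult. apply continuous_const.
  apply continuity_pt_filterlim. apply Rcontinuity_abs.
  apply exd_cont. auto_derive. auto.
Qed.

Lemma pic_step n t : Rabs (pic (S n) t - pic n t) <= MM / lam * (1/2) ^ n * exp (lam * Rabs t).
Proof.
  pose proof lam_pos. pose proof MM_pos. pose proof LL_pos.
  assert (He : 0 < exp (lam * Rabs t)) by apply exp_pos.
  induction n in t |- *.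
  - simpl. assert (E : @eq R (z + RInt (fun s => FF s z) 0 t - z) (RInt (fun s => FF s z) 0 t)) by ring.
    rewrite E.
    eapply Rle_trans. apply (RInt_abs_bound _ (fun u => MM * exp (lam * Rabs u))).
    intros; apply (FF_cont (fun _ => z)). apply continuous_const.
    intros; apply exp_abs_cont.
    intros u. eapply Rle_trans. apply FF_b. pose proof (exp_ineq1_le (lam * Rabs u)).
      assert (0 <= lam * Rabs u) by (apply Rmult_le_pos; [lra|apply Rabs_pos]). nra.
    rewrite int_exp_abs by lra. assert (0 <= MM / lam) by (apply Rdiv_le_0_compat; lra). nra.
  - change (pic (S (S n)) t) with (z + RInt (fun s => FF s (pic (S n) s)) 0 t).
    change (pic (S n) t) with (z + RInt (fun s => FF s (pic n s)) 0 t).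
    assert (E : @eq R (z + RInt (fun s => FF s (pic (S n) s)) 0 t - (z + RInt (fun s => FF s (pic n s)) 0 t))
      (RInt (fun s => FF s (pic (S n) s)) 0 t - RInt (fun s => FF s (pic n s)) 0 t)) by ring.
    rewrite E.
    rewrite <- RInt_minusR by (apply exR; intros; apply FFp_cont).
    set (c := LL * (MM / lam * (1/2) ^ n)).
    assert (Hc : 0 <= c). { unfold c. apply Rmult_le_pos. lra. apply Rmult_le_pos.
      apply Rdiv_le_0_compat; lra. apply pow_le; lra. }
    eapply Rle_trans. apply (RInt_abs_bound _ (fun u => c * exp (lam * Rabs u))).
    intros; apply contR_minus; apply FFp_cont.
    intros; apply exp_abs_cont.
    intros u. eapply Rle_trans. apply FF_lip. unfold c. rewrite Rmult_assoc. apply Rmult_le_compat_l. lra.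
    apply IHn.
    rewrite int_exp_abs by lra. unfold c, lam. simpl.
    assert (0 <= MM / (2 * LL) * (1 / 2) ^ n) by (apply Rmult_le_pos; [apply Rdiv_le_0_compat; lra|apply pow_le; lra]).
    replace (LL * (MM / (2 * LL) * (1 / 2) ^ n) / (2 * LL)) with (/2 * (MM / (2 * LL) * (1 / 2) ^ n)) by (field; lra).
    fold lam. fold lam in H2.
    assert (Hx : MM / lam * (1 / 2 * (1 / 2) ^ n) = / 2 * (MM / lam * (1 / 2) ^ n)) by (unfold Rdiv; ring).
    rewrite Hx.
    generalize dependent (MM / lam * (1 / 2) ^ n). intros X HX. nra.
Qed.

Lemma pic_cauchy n k t : Rabs (pic (n + k) t - pic n t) <= 2 * (MM / lam) * (1/2) ^ n * exp (lam * Rabs t).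
Proof.
  pose proof lam_pos. pose proof MM_pos.
  assert (He : 0 < exp (lam * Rabs t)) by apply exp_pos.
  assert (Hc : 0 <= MM / lam) by (apply Rdiv_le_0_compat; lra).
  assert (G : forall k, Rabs (pic (n + k) t - pic n t) <= 2 * (MM / lam) * (1/2) ^ n * (1 - (1/2) ^ k) * exp (lam * Rabs t)).
  { induction k0.
    - rewrite Nat.add_0_r, Rminus_diag, Rabs_R0. simpl. lra.
    - replace (pic (n + S k0) t - pic n t) with ((pic (S (n + k0)) t - pic (n + k0) t) + (pic (n + k0) t - pic n t))
        by (rewrite Nat.add_succ_r; ring).
      eapply Rle_trans. apply Rabs_triang.
      assert (S1 := pic_step (n + k0) t). rewrite pow_add in S1.
      change ((1/2) ^ (S k0)) with (1/2 * (1/2) ^ k0).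
      generalize dependent ((1/2) ^ n). generalize dependent ((1/2) ^ k0). intros.
      nra. }
  eapply Rle_trans. apply G.
  assert (0 < (1/2) ^ k) by (apply pow_lt; lra).
  assert (0 <= (1/2) ^ n) by (apply pow_le; lra).
  assert (0 <= MM / lam * (1/2) ^ n * exp (lam * Rabs t)) by (apply Rmult_le_pos; [apply Rmult_le_pos|]; lra).
  nra.
Qed.

Definition phi (t : R) := real (Lim_seq (fun n => pic n t)).

Lemma phi_lim t : is_lim_seq (fun n => pic n t) (phi t).
Proof.
  pose proof lam_pos. pose proof MM_pos.
  assert (Hc : 0 <= MM / lam) by (apply Rdiv_le_0_compat; lra).
  assert (Hex : ex_finite_lim_seq (fun n => pic n t)).
  { apply ex_lim_seq_cauchy_corr. intros eps.
    set (B := 4 * (MM / lam) * exp (lam * Rabs t) + 1).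
    assert (HB : 0 < B) by (unfold B; pose proof (exp_pos (lam * Rabs t)); nra).
    destruct (pow_lt_1_zero (1/2) ltac:(rewrite Rabs_pos_eq; lra) (eps / B)) as [N HN].
    apply Rdiv_lt_0_compat; [apply cond_pos|lra].
    exists N. intros n m Hn Hm.
    assert (A1 := pic_cauchy N (n - N) t). assert (A2 := pic_cauchy N (m - N) t).
    replace (N + (n - N))%nat with n in A1 by lia. replace (N + (m - N))%nat with m in A2 by lia.
    specialize (HN N (le_n N)). rewrite Rabs_pos_eq in HN by (apply pow_le; lra).
    apply (Rmult_lt_compat_l B) in HN; auto.
    replace (B * (eps / B)) with (pos eps) in HN by (field; lra).
    assert (Rabs (pic n t - pic m t) <= Rabs (pic n t - pic N t) + Rabs (pic m t - pic N t)).
    { replace (pic n t - pic m t) with ((pic n t - pic N t) - (pic m t - pic N t)) by ring.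
      eapply Rle_trans. apply Rabs_triang. rewrite Rabs_Ropp. lra. }
    assert (0 <= (1/2) ^ N) by (apply pow_le; lra).
    unfold B in HN. nra. }
  destruct Hex as [l Hl]. unfold phi. rewrite (is_lim_seq_unique _ _ Hl). exact Hl.
Qed.

Lemma phi_tail n t : Rabs (phi t - pic n t) <= 2 * (MM / lam) * (1/2) ^ n * exp (lam * Rabs t).
Proof. apply (lim_tail (fun n => pic n t) _ _ _ n (phi_lim t)). intros k. apply pic_cauchy. Qed.

Lemma pic_lip n t s : Rabs (pic n t - pic n s) <= MM * Rabs (t - s).
Proof.
  pose proof MM_pos. destruct n.
  - simpl. rewrite Rminus_diag, Rabs_R0. apply Rmult_le_pos; auto; apply Rabs_pos.
  - simpl. assert (Ch := RInt_ChaslesR (fun u => FF u (pic n u)) 0 s t (exR _ _ _ (FFp_cont n)) (exR _ _ _ (FFp_cont n))).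
    assert (E : @eq R (z + RInt (fun s0 => FF s0 (pic n s0)) 0 t - (z + RInt (fun s0 => FF s0 (pic n s0)) 0 s))
       (RInt (fun u => FF u (pic n u)) s t)) by (rewrite <- Ch; ring).
    rewrite E. eapply Rle_trans. apply (RInt_abs_bound _ (fun _ => MM)).
    apply FFp_cont. intros; apply continuous_const. intros; apply FF_b.
    rewrite RInt_const_R. rewrite Rabs_mult, Rabs_pos_eq by auto. lra.
Qed.

Lemma phi_lip t s : Rabs (phi t - phi s) <= MM * Rabs (t - s).
Proof.
  apply (vanish _ _ (2 * (MM / lam) * (exp (lam * Rabs t) + exp (lam * Rabs s)))). intros n.
  assert (A1 := phi_tail n t). assert (A2 := phi_tail n s). assert (A3 := pic_lip n t s).
  assert (Rabs (phi t - phi s) <= Rabs (phi t - pic n t) + Rabs (pic n t - pic n s) + Rabs (phi s - pic n s)).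
  { replace (phi t - phi s) with ((phi t - pic n t) + (pic n t - pic n s) - (phi s - pic n s)) by ring.
    eapply Rle_trans. apply Rabs_triang. rewrite Rabs_Ropp. apply Rplus_le_compat_r. apply Rabs_triang. }
  lra.
Qed.

Lemma phi_cont t : continuous phi t.
Proof. apply lip_cont with MM. intros s. apply phi_lip. Qed.

Lemma phi_int t : phi t = z + RInt (fun s => FF s (phi s)) 0 t.
Proof.
  pose proof lam_pos. pose proof MM_pos. pose proof LL_pos.
  assert (Hc : 0 <= MM / lam) by (apply Rdiv_le_0_compat; lra).
  assert (CF : forall s, continuous (fun s => FF s (phi s)) s) by (intros; apply FF_cont, phi_cont).
  assert (HV : Rabs (phi t - (z + RInt (fun s => FF s (phi s)) 0 t)) <= 0).
  { apply (vanish _ _ (3 * (MM / lam) * exp (lam * Rabs t))). intros n.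
    assert (A1 := phi_tail (S n) t).
    set (c := LL * (2 * (MM / lam) * (1/2) ^ n)).
    assert (Hc' : 0 <= c) by (unfold c; apply Rmult_le_pos; [lra|]; apply Rmult_le_pos; [lra|apply pow_le; lra]).
    assert (A2 : Rabs (RInt (fun s => FF s (pic n s) - FF s (phi s)) 0 t) <= c / lam * (exp (lam * Rabs t) - 1)).
    { rewrite <- (int_exp_abs c lam t) by lra.
      apply RInt_abs_bound. intros; apply contR_minus; auto. apply FFp_cont.
      intros; apply exp_abs_cont.
      intros u. eapply Rle_trans. apply FF_lip. unfold c. rewrite Rmult_assoc. apply Rmult_le_compat_l. lra.
      rewrite <- Rabs_Ropp, Ropp_minus_distr. apply phi_tail. }
    rewrite RInt_minusR in A2 by (apply exR; auto; apply FFp_cont).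
    change (pic (S n) t) with (z + RInt (fun s => FF s (pic n s)) 0 t) in A1.
    assert (Rabs (phi t - (z + RInt (fun s => FF s (phi s)) 0 t)) <=
            Rabs (phi t - (z + RInt (fun s => FF s (pic n s)) 0 t)) +
            Rabs (RInt (fun s => FF s (pic n s)) 0 t - RInt (fun s => FF s (phi s)) 0 t)).
    { assert (E : @eq R (phi t - (z + RInt (fun s => FF s (phi s)) 0 t))
        ((phi t - (z + RInt (fun s => FF s (pic n s)) 0 t)) +
         (RInt (fun s => FF s (pic n s)) 0 t - RInt (fun s => FF s (phi s)) 0 t))) by ring.
      rewrite E. apply Rabs_triang. }
    assert (E2 : c / lam = MM / lam * (1/2) ^ n).
    { unfold c, lam. field. lra. }
    rewrite E2 in A2. simpl in A1.
    assert (0 <= exp (lam * Rabs t)) by (apply Rlt_le, exp_pos).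
    assert (0 <= MM / lam * (1/2) ^ n) by (apply Rmult_le_pos; [lra|apply pow_le; lra]).
    generalize dependent ((1/2) ^ n). intros. nra. }
  assert (HZ : Rabs (phi t - (z + RInt (fun s => FF s (phi s)) 0 t)) = 0) by (pose proof (Rabs_pos (phi t - (z + RInt (fun s => FF s (phi s)) 0 t))); lra).
  apply Rabs_eq_0 in HZ. lra.
Qed.

Lemma phi_der t : is_derive phi t (FF t (phi t)).
Proof.
  assert (CF : forall s, continuous (fun s => FF s (phi s)) s) by (intros; apply FF_cont, phi_cont).
  apply (is_derive_ext (fun t => z + RInt (fun s => FF s (phi s)) 0 t)).
  intros; symmetry; apply phi_int.
  eapply is_derive_val. apply (is_derive_plus (fun _ => z) (fun t => RInt (fun s => FF s (phi s)) 0 t)).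
  apply is_derive_constR. apply int_der; auto. unfold plus; simpl. ring.
Qed.

Lemma phi_0 : phi 0 = z.
Proof. rewrite phi_int, RInt_pointR. ring. Qed.

Variable x : R -> R.
Hypothesis Hx : forall t, 0 <= t <= 1 -> is_derive x t (cub al be ga t (x t)).
Hypothesis HxK : forall t, 0 <= t <= 1 -> Rabs (x t) <= Kx.

Lemma x_FF t : 0 <= t <= 1 -> is_derive x t (FF t (x t)).
Proof.
  intros Ht. unfold FF. rewrite cl01_id by auto. rewrite clK_id. auto.
  specialize (HxK t Ht). unfold KK. lra.
Qed.

Lemma phi_close t : 0 <= t <= 1 -> (phi t - x t) ^ 2 <= (z - x 0) ^ 2 * exp (2 * LL).
Proof.
  intros Ht. pose proof LL_pos.
  set (E := fun s => (phi s - x s) ^ 2 * exp (- (2 * LL) * s)).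
  set (dE := fun s => 2 * (phi s - x s) * (FF s (phi s) - FF s (x s)) * exp (- (2 * LL) * s)
                      - 2 * LL * (phi s - x s) ^ 2 * exp (- (2 * LL) * s)).
  assert (HD : forall s, 0 <= s <= 1 -> is_derive E s (dE s)).
  { intros s Hs. assert (H1 := phi_der s). assert (H2 := x_FF s Hs). unfold E, dE.
    auto_derive. repeat split; eexists; eauto.
    rewrite (Derive_of _ _ _ H1), (Derive_of _ _ _ H2). ring. }
  assert (Hneg : forall s, 0 <= s <= 1 -> dE s <= 0).
  { intros s Hs. unfold dE. assert (Hl := FF_lip s (phi s) (x s)).
    assert (He := exp_pos (- (2 * LL) * s)).
    set (w := phi s - x s) in *. set (d := FF s (phi s) - FF s (x s)) in *.
    assert (w * d <= LL * w ^ 2).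
    { assert (w * d <= Rabs w * Rabs d) by (rewrite <- Rabs_mult; apply RRle_abs).
      assert (Rabs w * Rabs d <= Rabs w * (LL * Rabs w)) by (apply Rmult_le_compat_l; [apply Rabs_pos|auto]).
      assert (Rabs w * (LL * Rabs w) = LL * w ^ 2).
      { rewrite <- (pow2_abs w). ring. }
      lra. }
    generalize dependent (exp (- (2 * LL) * s)). intros. nra. }
  destruct (MVT_gen E 0 t dE) as [c [Hc Hmvt]].
  - intros y Hy. apply HD. unfold Rmin, Rmax in Hy; destruct Rle_dec; lra.
  - intros y Hy. apply continuity_pt_filterlim. apply exd_cont. eexists. apply HD.
    unfold Rmin, Rmax in Hy; destruct Rle_dec; lra.
  - assert (Hc' : 0 <= c <= 1) by (unfold Rmin, Rmax in Hc; destruct Rle_dec; lra).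
    assert (Hn := Hneg c Hc').
    assert (E t <= E 0) by nra.
    unfold E in H0. rewrite phi_0, Rmult_0_r, exp_0, Rmult_1_r in H0.
    assert (Hx1 : exp (- (2 * LL) * t) * exp (2 * LL * t) = 1).
    { rewrite <- exp_plus. replace (- (2 * LL) * t + 2 * LL * t) with 0 by ring. apply exp_0. }
    assert (Hmon : exp (2 * LL * t) <= exp (2 * LL)).
    { destruct (Req_dec t 1) as [->|Hne]. rewrite Rmult_1_r. lra.
      left. apply exp_increasing. nra. }
    assert (0 <= (phi t - x t) ^ 2) by apply pow2_ge_0.
    assert (0 <= (z - x 0) ^ 2) by apply pow2_ge_0.
    assert (0 < exp (2 * LL * t)) by apply exp_pos.
    assert ((phi t - x t) ^ 2 = (phi t - x t) ^ 2 * exp (- (2 * LL) * t) * exp (2 * LL * t)).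
    { rewrite Rmult_assoc, Hx1. ring. }
    rewrite H4. apply Rle_trans with ((z - x 0) ^ 2 * exp (2 * LL * t)).
    apply Rmult_le_compat_r; lra. apply Rmult_le_compat_l; lra.
Qed.

Lemma phi_sol : Rabs (z - x 0) < exp (- LL) ->
  (forall t, 0 <= t <= 1 -> is_derive phi t (cub al be ga t (phi t))) /\ forall t, 0 <= t <= 1 -> Rabs (phi t - x t) <= exp LL * Rabs (z - x 0).
Proof.
  intros Hz.
  assert (B : forall t, 0 <= t <= 1 -> Rabs (phi t - x t) <= exp LL * Rabs (z - x 0)).
  { intros t Ht. assert (H := phi_close t Ht).
    assert (Hs : exp (2 * LL) = exp LL ^ 2) by (replace (2 * LL) with (LL + LL) by ring; rewrite exp_plus; ring).
    rewrite Hs in H. rewrite <- (pow2_abs (phi t - x t)) in H. rewrite <- (pow2_abs (z - x 0)) in H.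
    assert (0 <= Rabs (phi t - x t)) by apply Rabs_pos.
    assert (0 <= Rabs (z - x 0)) by apply Rabs_pos.
    assert (0 < exp LL) by apply exp_pos.
    assert (0 <= exp LL * Rabs (z - x 0)) by nra.
    destruct (Rle_or_lt (Rabs (phi t - x t)) (exp LL * Rabs (z - x 0))) as [|HH]; auto.
    exfalso. assert ((exp LL * Rabs (z - x 0)) ^ 2 < Rabs (phi t - x t) ^ 2) by (simpl; nra).
    revert H4. rewrite Rpow_mult_distr. lra. }
  split; auto.
  intros t Ht. assert (H := phi_der t). unfold FF in H. rewrite cl01_id in H by auto.
  rewrite clK_id in H; auto.
  assert (Hb := B t Ht). assert (He : exp LL * exp (- LL) = 1) by (rewrite <- exp_plus; replace (LL + - LL) with 0 by ring; apply exp_0).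
  assert (0 < exp LL) by apply exp_pos.
  assert (exp LL * Rabs (z - x 0) < 1) by (rewrite <- He; apply Rmult_lt_compat_l; auto).
  specialize (HxK t Ht). unfold KK.
  replace (phi t) with (x t + (phi t - x t)) by ring.
  eapply Rle_trans. apply Rabs_triang. lra.
Qed.
End Picard.

Lemma exist_near (al be ga x : R -> R) :
  (forall t, ex_derive al t) -> (forall t, ex_derive be t) -> (forall t, ex_derive ga t) ->
  (forall t, 0 <= t <= 1 -> is_derive x t (cub al be ga t (x t))) ->
  exists d, 0 < d /\ exists Lc, 0 < Lc /\ forall z, Rabs (z - x 0) < d ->
    exists u, (forall t, 0 <= t <= 1 -> is_derive u t (cub al be ga t (u t))) /\ u 0 = z /\ forall t, 0 <= t <= 1 -> Rabs (u t - x t) <= Lc * Rabs (z - x 0).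
Proof.
  intros Hal Hbe Hga Hx.
  destruct (bounded01 al) as [Ma [HMa0 HMa]]. intros; apply exd_cont; auto.
  destruct (bounded01 be) as [Mb [HMb0 HMb]]. intros; apply exd_cont; auto.
  destruct (bounded01 ga) as [Mg [HMg0 HMg]]. intros; apply exd_cont; auto.
  destruct (bounded01 x) as [Kx [HKx0 HKx]]. intros; apply exd_cont; eexists; apply Hx; auto.
  exists (exp (- LL Ma Mb Mg Kx)). split. apply exp_pos.
  exists (exp (LL Ma Mb Mg Kx)). split. apply exp_pos.
  intros z Hz.
  destruct (phi_sol al be ga Hal Hbe Hga Ma Mb Mg Kx HMa HMb HMg HKx0 HMa0 HMb0 HMg0 z x Hx HKx Hz) as [S1 S2].
  eexists. split. exact S1. split. eapply phi_0; eauto. exact S2.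
Qed.

Lemma poinc_spec (A B C : R -> R) z : (exists u, is_sol A B C u /\ u 0 = z) ->
  exists psi, is_sol A B C psi /\ psi 0 = z /\ poincare A B C z = psi 1.
Proof.
  intros H. unfold poincare. destruct excluded_middle_informative as [e|n].
  - destruct (constructive_indefinite_description _ e) as [psi [H1 H2]]. simpl.
    exists psi; auto.
  - contradiction.
Qed.

Lemma poinc_der (A B C x : R -> R) :
  (forall t, ex_derive A t) -> (forall t, ex_derive B t) -> (forall t, ex_derive C t) ->
  is_sol A B C x ->
  is_derive (poincare A B C) (x 0) (exp (RInt (fun s => 3 * A s * x s ^ 2 + 2 * B s * x s + C s) 0 1)).
Proof.
  intros HA HB HC Hx.
  assert (Hx' : forall t, 0 <= t <= 1 -> is_derive x t (cub A B C t (x t))) by exact Hx.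
  destruct (exist_near A B C x HA HB HC Hx') as [d [Hd [Lc [HLc Hex]]]].
  destruct (bounded01 A) as [Ma [HMa0 HMa]]. intros; apply exd_cont; auto.
  destruct (bounded01 B) as [Mb [HMb0 HMb]]. intros; apply exd_cont; auto.
  destruct (bounded01 x) as [Kx [HKx0 HKx]]. intros; apply exd_cont; eexists; apply Hx; auto.
  set (k0 := fun s => 3 * A s * x s ^ 2 + 2 * B s * x s + C s).
  set (D0 := RInt k0 0 1).
  assert (Hxd : forall t, 0 <= t <= 1 -> ex_derive x t) by (intros; eexists; apply Hx; auto).
  destruct (poinc_spec A B C (x 0)) as [psi0 [P0s [P00 P01]]]. exists x; auto.
  assert (Px0 : poincare A B C (x 0) = x 1).
  { rewrite P01. assert (H := cub_diff A B C psi0 x HA HB HC P0s Hx' 1 ltac:(lra)).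
    rewrite P00, Rminus_diag, Rmult_0_l in H. lra. }
  apply is_derive_Reals. intros eps Heps.
  destruct (cont_eps exp D0 (exd_cont exp D0 ltac:(auto_derive; auto)) eps Heps) as [eta [Heta Hexp]].
  set (c1 := Lc * (Ma * (Lc * d + 3 * Kx) + Mb)).
  assert (Hc1 : 0 <= c1).
  { unfold c1. apply Rmult_le_pos. lra. apply Rplus_le_le_0_compat; auto. apply Rmult_le_pos; auto. nra. }
  assert (Hdel : 0 < Rmin d (eta / (c1 + 1))).
  { apply Rmin_pos; auto. apply Rdiv_lt_0_compat; lra. }
  exists (mkposreal _ Hdel). intros h Hh0 Hh. simpl in Hh.
  assert (Hhd : Rabs h < d) by (eapply Rlt_le_trans; [exact Hh|apply Rmin_l]).
  assert (Hhe : Rabs h < eta / (c1 + 1)) by (eapply Rlt_le_trans; [exact Hh|apply Rmin_r]).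
  destruct (Hex (x 0 + h)) as [u [Us [U0 Ub]]].
  { replace (x 0 + h - x 0) with h by ring. auto. }
  replace (x 0 + h - x 0) with h in Ub by ring.
  destruct (poinc_spec A B C (x 0 + h)) as [psi [Ps [P0 P1]]]. exists u; auto.
  rewrite P1, Px0.
  assert (Hpu : forall t, 0 <= t <= 1 -> psi t = u t).
  { intros t Ht. assert (H := cub_diff A B C psi u HA HB HC Ps Us t Ht).
    rewrite P0, U0, Rminus_diag, Rmult_0_l in H. lra. }
  assert (Hpd : forall t, 0 <= t <= 1 -> ex_derive psi t) by (intros; eexists; apply Ps; auto).
  assert (Hpx : forall t, 0 <= t <= 1 -> Rabs (psi t - x t) <= Lc * Rabs h) by (intros; rewrite Hpu; auto).
  set (k1 := fun s => A s * (psi s ^ 2 + psi s * x s + x s ^ 2) + B s * (psi s + x s) + C s).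
  assert (Hdiff := cub_diff A B C psi x HA HB HC Ps Hx' 1 ltac:(lra)).
  rewrite P0 in Hdiff. replace (x 0 + h - x 0) with h in Hdiff by ring. fold k1 in Hdiff.
  rewrite Hdiff. replace (h * exp (RInt k1 0 1) / h) with (exp (RInt k1 0 1)) by (field; auto).
  apply Hexp.
  assert (E : @eq R (RInt k1 0 1 - D0) (RInt (fun s => k1 s - k0 s) 0 1)).
  { unfold D0. rewrite RInt_minusR. reflexivity.
    apply ex_RInt01; try lra. intros t Ht. unfold k1. apply exd_cont. auto_derive.
      repeat split; auto; try apply Hpd; try apply Hxd; auto.
    apply ex_RInt01; try lra. intros t Ht. unfold k0. apply exd_cont. auto_derive.
      repeat split; auto; try apply Hxd; auto. }
  rewrite E.
  eapply Rle_lt_trans. apply abs_RInt_le_const with (M := Rabs h * c1). lra.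
  apply ex_RInt01; try lra. intros t Ht. unfold k1, k0. apply exd_cont. auto_derive.
      repeat split; auto; try apply Hpd; try apply Hxd; auto.
  intros t Ht. unfold k1, k0.
  replace (A t * (psi t ^ 2 + psi t * x t + x t ^ 2) + B t * (psi t + x t) + C t -
           (3 * A t * x t ^ 2 + 2 * B t * x t + C t))
     with ((psi t - x t) * (A t * (psi t + 2 * x t) + B t)) by ring.
  rewrite Rabs_mult.
  specialize (Hpx t Ht). specialize (HMa t Ht). specialize (HMb t Ht). specialize (HKx t Ht).
  assert (Hq : Rabs (A t * (psi t + 2 * x t) + B t) <= Ma * (Lc * d + 3 * Kx) + Mb).
  { eapply Rle_trans. apply Rabs_triang. rewrite Rabs_mult.
    assert (Rabs (psi t + 2 * x t) <= Lc * d + 3 * Kx).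
    { replace (psi t + 2 * x t) with ((psi t - x t) + 3 * x t) by ring.
      eapply Rle_trans. apply Rabs_triang. rewrite Rabs_mult, (Rabs_pos_eq 3) by lra.
      assert (Lc * Rabs h <= Lc * d) by (apply Rmult_le_compat_l; lra). lra. }
    assert (Rabs (A t) * Rabs (psi t + 2 * x t) <= Ma * (Lc * d + 3 * Kx))
      by (apply Rmult_le_compat; auto; apply Rabs_pos).
    lra. }
  unfold c1.
  assert (0 <= Rabs (psi t - x t)) by apply Rabs_pos.
  assert (0 <= Rabs (A t * (psi t + 2 * x t) + B t)) by apply Rabs_pos.
  assert (Rabs (psi t - x t) * Rabs (A t * (psi t + 2 * x t) + B t) <=
          (Lc * Rabs h) * (Ma * (Lc * d + 3 * Kx) + Mb)) by (apply Rmult_le_compat; auto).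
  lra.
  assert (Rabs h * c1 < eta).
  { apply Rle_lt_trans with (Rabs h * (c1 + 1)). apply Rmult_le_compat_l. apply Rabs_pos. lra.
    apply Rmult_lt_reg_r with (/ (c1 + 1)). apply Rinv_0_lt_compat; lra.
    rewrite Rmult_assoc, Rinv_r by lra. rewrite Rmult_1_r. exact Hhe. }
  lra.
Qed.

Lemma smooth_d f : smooth f -> forall t, ex_derive f t.
Proof. intros H t. exact (H 1%nat t). Qed.

Section Main.
Variables A B C : R -> R.
Hypothesis HA : forall t, ex_derive A t.
Hypothesis HB : forall t, ex_derive B t.
Hypothesis HC : forall t, ex_derive C t.
Hypothesis HC0 : RInt C 0 1 = 0.

Let I := fun t => RInt C 0 t.
Lemma I_der t : is_derive I t (C t).
Proof. apply int_der. intros; apply exd_cont; auto. Qed.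
Let At := fun t => A t * exp (I t) ^ 2.
Let Bt := fun t => B t * exp (I t).
Lemma At_d t : ex_derive At t.
Proof. unfold At. auto_derive. repeat split; auto; exists (C t); apply I_der. Qed.
Lemma Bt_d t : ex_derive Bt t.
Proof. unfold Bt. auto_derive. repeat split; auto; exists (C t); apply I_der. Qed.

Lemma zero_sol : is_sol A B C (fun _ => 0).
Proof. intros t Ht. eapply is_derive_val. apply is_derive_constR. ring. Qed.

Lemma x0_nz x : periodic_orbit A B C x -> nonzero_on01 x -> x 0 <> 0.
Proof.
  intros [Hs Hp] [t [Ht Hn]] H0. apply Hn.
  assert (H := cub_diff A B C x (fun _ => 0) HA HB HC Hs zero_sol t Ht).
  rewrite H0, !Rminus_0_r, Rmult_0_l in H. exact H.
Qed.

Let yof (x : R -> R) := fun t => x t * exp (- I t).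

Lemma y_psol x : periodic_orbit A B C x -> nonzero_on01 x -> psol At Bt (yof x).
Proof.
  intros Hpo Hnz. assert (Hx0 := x0_nz x Hpo Hnz). destruct Hpo as [Hs Hp].
  split; [|split].
  - intros t Ht. assert (H := Hs t Ht). assert (HI := I_der t). unfold yof.
    auto_derive. split. eexists; eauto. split; auto. eexists; eauto.
    rewrite (Derive_of _ _ _ H), (Derive_of _ _ _ HI). unfold cub, At, Bt.
    rewrite exp_Ropp. assert (0 < exp (I t)) by apply exp_pos. field. lra.
  - unfold yof, I. rewrite RInt_pointR, HC0, Ropp_0, exp_0. rewrite Hp. ring.
  - unfold yof, I. rewrite RInt_pointR, Ropp_0, exp_0, Rmult_1_r. auto.
Qed.

Variables a b : R.
Hypothesis Hab1 : exists t, 0 <= t <= 1 /\ a * A t * exp (RInt C 0 t) + b * B t <> 0.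
Hypothesis Hab2 : (forall t, 0 <= t <= 1 -> 0 <= a * A t * exp (RInt C 0 t) + b * B t) \/
      (forall t, 0 <= t <= 1 -> a * A t * exp (RInt C 0 t) + b * B t <= 0).

Lemma Peq t : (fun t0 => a * At t0 + b * Bt t0) t = exp (I t) * (a * A t * exp (RInt C 0 t) + b * B t).
Proof. unfold At, Bt, I. simpl. ring. Qed.

Lemma HPs : (forall t, 0 <= t <= 1 -> 0 <= (fun t0 => a * At t0 + b * Bt t0) t) \/
            (forall t, 0 <= t <= 1 -> (fun t0 => a * At t0 + b * Bt t0) t <= 0).
Proof.
  destruct Hab2 as [H|H]; [left|right]; intros t Ht; rewrite Peq; specialize (H t Ht);
  assert (0 < exp (I t)) by apply exp_pos; nra.
Qed.

Lemma HPn : exists t, 0 <= t <= 1 /\ (fun t0 => a * At t0 + b * Bt t0) t <> 0.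
Proof.
  destruct Hab1 as [t [Ht Hn]]. exists t. split; auto. rewrite Peq.
  apply Rmult_integral_contrapositive_currified; auto. apply Rgt_not_eq, exp_pos.
Qed.

Lemma uniq_main x y : periodic_orbit A B C x -> nonzero_on01 x ->
  periodic_orbit A B C y -> nonzero_on01 y -> forall t, 0 <= t <= 1 -> x t = y t.
Proof.
  intros Px Nx Py Ny t Ht.
  assert (H := uniq0 At Bt At_d Bt_d a b HPs HPn (yof x) (yof y) (y_psol x Px Nx) (y_psol y Py Ny)).
  unfold yof, I in H. rewrite RInt_pointR, Ropp_0, exp_0, !Rmult_1_r in H.
  assert (D := cub_diff A B C x y HA HB HC (proj1 Px) (proj1 Py) t Ht).
  rewrite H, Rminus_diag, Rmult_0_l in D. lra.
Qed.

Lemma hyp_main x : periodic_orbit A B C x -> nonzero_on01 x -> hyperbolic A B C (x 0).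
Proof.
  intros Px Nx.
  assert (Hyp := Hyp_nz At Bt At_d Bt_d a b HPs HPn (yof x) (y_psol x Px Nx)).
  assert (Hxd : forall t, 0 <= t <= 1 -> ex_derive x t) by (intros; eexists; apply (proj1 Px); auto).
  exists (exp (RInt (fun s => 3 * A s * x s ^ 2 + 2 * B s * x s + C s) 0 1)). split.
  apply poinc_der; auto. apply Px.
  intros He0. assert (He : RInt (fun s => 3 * A s * x s ^ 2 + 2 * B s * x s + C s) 0 1 = 0)
    by (apply exp_inv; rewrite exp_0; exact He0). clear He0.
  assert (E : @eq R (RInt (fun s => 3 * A s * x s ^ 2 + 2 * B s * x s + C s) 0 1)
     (RInt (fun t => 3 * At t * yof x t ^ 2 + 2 * Bt t * yof x t) 0 1 + RInt C 0 1)).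
  { rewrite <- RInt_plusR. apply RInt_extR. intros s Hs. unfold At, Bt, yof.
    rewrite exp_Ropp. assert (0 < exp (I s)) by apply exp_pos. field. lra.
    apply ex_RInt01; try lra. intros t Ht. apply exd_cont. unfold yof.
    assert (Hi := I_der t). assert (Ha := At_d t). assert (Hb := Bt_d t).
    auto_derive. repeat split; auto; try apply Hxd; auto; exists (C t); auto.
    apply ex_RInt01; try lra. intros t Ht. apply exd_cont. auto. }
  rewrite HC0 in E. apply Hyp. lra.
Qed.
End Main.

Theorem theorem5p1 (A B C : R -> R) :
  smooth A -> smooth B -> smooth C ->
  RInt C 0 1 = 0 ->
  (exists a b : R,
     (exists t, 0 <= t <= 1 /\ a * A t * exp (RInt C 0 t) + b * B t <> 0) /\
     ((forall t, 0 <= t <= 1 -> 0 <= a * A t * exp (RInt C 0 t) + b * B t) \/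
      (forall t, 0 <= t <= 1 -> a * A t * exp (RInt C 0 t) + b * B t <= 0))) ->
  (forall x y : R -> R,
     periodic_orbit A B C x -> nonzero_on01 x ->
     periodic_orbit A B C y -> nonzero_on01 y ->
     forall t, 0 <= t <= 1 -> x t = y t) /\
  (forall x : R -> R,
     periodic_orbit A B C x -> nonzero_on01 x -> hyperbolic A B C (x 0)).
Proof.
  intros SA SB SC HC0 [a [b [H1 H2]]].
  assert (HA := smooth_d A SA). assert (HB := smooth_d B SB). assert (HC := smooth_d C SC).
  split.
  - intros x y. apply (uniq_main A B C HA HB HC HC0 a b H1 H2).
  - intros x. apply (hyp_main A B C HA HB HC HC0 a b H1 H2).
Qed.
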